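(* Let $m\ge2$, $n\ge2$, and let $\mathcal{A}\in\mathbb{S}_{m,n}$ be a Hankel tensor with generating vector $v=(v_0,\dots,v_{(n-1)m})^T$. (i) If $v_0=v_{(n-1)m}=0$, then $\mathcal{A}$ is completely positive if and only if $\mathcal{A}$ is the zero tensor. (ii) If $n\ge3$, $\mathcal{A}$ is completely positive, and $v_{(i-1)m}=0$ for some $2\le i\le n-1$, then $v_0\ge0$, $v_{(n-1)m}\ge0$ and $\mathcal{A}=v_0(e^{(1)})^m+v_{(n-1)m}(e^{(n)})^m$. (iii) If $v_0=0$ and $v_j\ne0$ for some $j\in[m-1]$, then $\mathcal{A}$ is not completely positive.
   Context: $\mathcal{A}=(a_{i_1\ldots i_m})\in\mathbb{S}_{m,n}$ is a Hankel tensor with generating vector $v$ if $a_{i_1\ldots i_m}=v_{i_1+\dots+i_m-m}$ for all $i_1,\dots,i_m\in[n]$. $e^{(i)}$ is the $i$th standard basis vector of $\mathbb{R}^n$; $(u^m)_{i_1\ldots i_m}=u_{i_1}\cdots u_{i_m}$. A tensor $\mathcal{A}\in\mathbb{S}_{m,n}$ is completely positive if $\mathcal{A}=\sum_{k=1}^r(u^{(k)})^m$ for some $r\ge1$ and $u^{(k)}\in\mathbb{R}^n_+$. *)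

(* Defs.v *)
From HB Require Import structures.
From mathcomp Require Import all_boot all_order all_algebra all_fingroup.
Set Implicit Arguments. Unset Strict Implicit. Unset Printing Implicit Defensive.
Import Order.TTheory GRing.Theory Num.Theory.
Local Open Scope ring_scope.

(* An order-m, dimension-n tensor; indices are 0-based: idx : 'I_m -> 'I_n. *)
Definition tensor (R : Type) (m n : nat) := {ffun 'I_m -> 'I_n} -> R.

Definition is_symmetric (R : Type) (m n : nat) (A : tensor R m n) : Prop :=
  forall (idx : {ffun 'I_m -> 'I_n}) (s : 'S_m), A [ffun k => idx (s k)] = A idx.

(* Hankel with generating vector v (0-based: a_{i_1..i_m} = v_{i_1+..+i_m}). *)
Definition is_hankel (R : Type) (m n : nat) (A : tensor R m n) (v : nat -> R) : Prop :=
  forall idx : {ffun 'I_m -> 'I_n}, A idx = v (\sum_(k < m) nat_of_ord (idx k))%N.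

Definition tpow (R : numDomainType) (m : nat) (n : nat) (u : 'I_n -> R) : tensor R m n :=
  fun idx => \prod_(k < m) u (idx k).
Arguments tpow {R} m {n} u idx.

Definition ebasis (R : numDomainType) (n i : nat) : 'I_n -> R :=
  fun j => ((nat_of_ord j == i)%N)%:R.

Definition completely_positive (R : numDomainType) (m n : nat) (A : tensor R m n) : Prop :=
  exists (r : nat) (us : 'I_r -> 'I_n -> R),
    (1 <= r)%N /\ (forall k i, 0 <= us k i) /\
    forall idx, A idx = \sum_(k < r) tpow m (us k) idx.

Definition zero_tensor (R : numDomainType) (m n : nat) (A : tensor R m n) : Prop :=
  forall idx, A idx = 0.
Arguments ebasis {R} n i j.

(* Main.v *)
Require Import Defs.
From HB Require Import structures.
From mathcomp Require Import all_boot all_order all_algebra all_fingroup.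
From mathcomp Require Import zify.
Import Order.TTheory GRing.Theory Num.Theory.
Local Open Scope ring_scope.

Definition gfill (n t k : nat) : nat := minn (n - 1) (t - (n - 1) * k).

Lemma gfill_sum n t p : (\sum_(k < p) gfill n t k = minn t ((n - 1) * p))%N.
Proof.
elim: p => [|p IH]; first by rewrite big_ord0; lia.
rewrite big_ord_recr /= IH /gfill mulnS. set N := (n-1)%N. set P := (N * p)%N. lia.
Qed.

Definition fval (n j t : nat) (k : nat) : nat := if k == 0%N then j else gfill n t k.-1.

Lemma fval_lt n j t k : (j < n)%N -> (fval n j t k < n)%N.
Proof. rewrite /fval /gfill; case: eqP => _; lia. Qed.

Lemma exists_idx (m n j s : nat) : (0 < m)%N -> (j < n)%N -> (j <= s)%N ->
  (s <= j + (m - 1) * (n - 1))%N ->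
  exists idx : {ffun 'I_m -> 'I_n}, (exists k, nat_of_ord (idx k) = j) /\
    (\sum_(k < m) nat_of_ord (idx k) = s)%N.
Proof.
case: m => [//|m] _ Hj H1 H2.
exists [ffun k : 'I_m.+1 => Ordinal (@fval_lt n j (s - j) (nat_of_ord k) Hj)].
split.
  by exists ord0; rewrite ffunE /= /fval.
rewrite big_ord_recl ffunE /= /fval /=.
under eq_bigr => i _ do rewrite ffunE /fval /=.
under eq_bigr => i _ do rewrite add0n. rewrite gfill_sum. move: H2; rewrite subn1 /= mulnC. set P := (m * (n-1))%N. lia.
Qed.
Lemma a1 m n s : (2 <= m)%N -> (2 <= n)%N -> (s <= m * (n-1))%N -> ~~ (s <= (m-1)*(n-1))%N ->
  (n - 1 <= s)%N /\ (s <= n - 1 + (m-1)*(n-1))%N.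
Proof. move=> *. have: ((m-1)*(n-1) + (n-1) = m * (n-1))%N.
  by rewrite -{2}(subnK (_ : 1 <= m)%N) ?mulnDl ?mul1n //; lia.
 have: (n - 1 <= (m-1)*(n-1))%N by apply: leq_pmull; lia.
 lia. Qed.
Lemma a2 m n j : (2 <= m)%N -> (j + 1 <= n - 2)%N -> (m * (j+1) <= j + (m-1)*(n-1))%N.
Proof. move=> *. nia. Qed.
Lemma a3 m j : (2 <= m)%N -> (2 <= j)%N -> (j <= m * (j-1))%N.
Proof. move=> *. nia. Qed.
Lemma a4 m n j : (2 <= m)%N -> (j <= n - 1)%N -> (m * (j-1) <= j + (m-1)*(n-1))%N.
Proof. move=> *. nia. Qed.
Lemma a5 m n j : (2 <= m)%N -> (2 <= n)%N -> (j <= m - 1)%N -> (j <= (m-1)*(n-1))%N.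
Proof. move=> *. nia. Qed.
Lemma a6 m n s : (2 <= m)%N -> (s <= (m-1)*(n-1))%N -> (s <= 1 + (m-1)*(n-1))%N.
Proof. lia. Qed.

Lemma tpow_zero (R : numDomainType) m n (u : 'I_n -> R) (idx : {ffun 'I_m -> 'I_n}) k :
  u (idx k) = 0 -> tpow m u idx = 0.
Proof. by move=> H; rewrite /tpow (bigD1 k) //= H mul0r. Qed.

Lemma tpow_diag (R : numDomainType) m n (u : 'I_n -> R) (i : 'I_n) :
  tpow m u [ffun=> i] = u i ^+ m.
Proof.
rewrite /tpow. under eq_bigr => k _ do rewrite ffunE. by rewrite prodr_const card_ord.
Qed.

Lemma zero_range (R : numDomainType) m n (A : tensor R m n) v r
  (us : 'I_r -> 'I_n -> R) (j : 'I_n) :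
  (0 < m)%N -> is_hankel A v -> (forall idx, A idx = \sum_(k<r) tpow m (us k) idx) ->
  (forall k, us k j = 0) ->
  forall s, (j <= s)%N -> (s <= j + (m-1)*(n-1))%N -> v s = 0.
Proof.
move=> Hm HA HD Z s H1 H2.
have [idx [[k Hk] Hs]] := @exists_idx m n j s Hm (ltn_ord j) H1 H2.
rewrite -Hs -HA HD big1 // => i _.
apply: (@tpow_zero _ m n _ idx k). have -> : idx k = j by apply: val_inj.
exact: Z.
Qed.

Lemma diag_val (R : numDomainType) m n (A : tensor R m n) v r
  (us : 'I_r -> 'I_n -> R) (i : 'I_n) :
  is_hankel A v -> (forall idx, A idx = \sum_(k<r) tpow m (us k) idx) ->
  v (m * i)%N = \sum_(k<r) us k i ^+ m.
Proof.
move=> HA HD.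
have := HA [ffun=> i]. rewrite HD.
under eq_bigr => k _ do rewrite tpow_diag.
under [X in v X]eq_bigr => k _ do rewrite ffunE.
by rewrite sum_nat_const card_ord => <-.
Qed.

Lemma diag_ge0 (R : numDomainType) m n (A : tensor R m n) v r
  (us : 'I_r -> 'I_n -> R) (i : 'I_n) :
  is_hankel A v -> (forall idx, A idx = \sum_(k<r) tpow m (us k) idx) ->
  (forall k i, 0 <= us k i) -> 0 <= v (m * i)%N.
Proof.
move=> HA HD Hp; rewrite (@diag_val _ m n A v r us i HA HD); apply: sumr_ge0 => k _.
exact: exprn_ge0.
Qed.

Lemma diag_zero (R : numDomainType) m n (A : tensor R m n) v r
  (us : 'I_r -> 'I_n -> R) (i : 'I_n) :
  (0 < m)%N -> is_hankel A v -> (forall idx, A idx = \sum_(k<r) tpow m (us k) idx) ->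
  (forall k i, 0 <= us k i) -> v (m * i)%N = 0 -> forall k, us k i = 0.
Proof.
move=> Hm HA HD Hp; rewrite (@diag_val _ m n A v r us i HA HD) => /psumr_eq0P H k.
have /eqP := H (fun k _ => exprn_ge0 _ (Hp k i)) k isT.
by rewrite expf_eq0 Hm /= => /eqP.
Qed.

Theorem mainTheorem6 (R : realFieldType) (m n : nat) (A : tensor R m n) (v : nat -> R) :
  (2 <= m)%N -> (2 <= n)%N -> is_symmetric A -> is_hankel A v ->
  (* (i) *)
  ((v 0%N = 0 /\ v ((n - 1) * m)%N = 0) ->
     (completely_positive A <-> zero_tensor A)) /\
  (* (ii): 1-based i in [2, n-1] corresponds to 0-based i in [1, n-2] *)
  ((3 <= n)%N -> completely_positive A ->
     (exists i : nat, (1 <= i)%N /\ (i <= n - 2)%N /\ v (i * m)%N = 0) ->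
     0 <= v 0%N /\ 0 <= v ((n - 1) * m)%N /\
     forall idx, A idx = v 0%N * tpow m (ebasis n 0) idx
                         + v ((n - 1) * m)%N * tpow m (ebasis n (n - 1)) idx) /\
  (* (iii) *)
  (v 0%N = 0 -> (exists j : nat, (1 <= j)%N /\ (j <= m - 1)%N /\ v j != 0) ->
     ~ completely_positive A).
Proof.
move=> Hm Hn HS HA.
have Hm0 : (0 < m)%N by lia.
have Hn0 : (0 < n)%N by lia.
pose i0 : 'I_n := Ordinal Hn0.
have HnN : (n - 1 < n)%N by lia.
pose iN : 'I_n := Ordinal HnN.
have Hsum : forall idx : {ffun 'I_m -> 'I_n},
    (\sum_(k<m) nat_of_ord (idx k) <= m * (n-1))%N.
  move=> idx; rewrite -[X in (_ <= X * _)%N]card_ord -sum_nat_const.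
  apply: leq_sum => k _; have := ltn_ord (idx k); lia.
split.
  case=> H0 HN; split.
    case=> r [us [Hr [Hp HD]]] idx.
    have Z0 := @diag_zero _ m n A v r us i0 Hm0 HA HD Hp.
    have ZN := @diag_zero _ m n A v r us iN Hm0 HA HD Hp.
    rewrite /= muln0 in Z0. have {}Z0 := Z0 H0.
    rewrite /= mulnC in ZN. have {}ZN := ZN HN.
    rewrite HA. have := Hsum idx. set s := (\sum_(k<m) _)%N => Hs.
    case: (leqP s ((m-1)*(n-1))) => Hc.
      by apply: (@zero_range _ m n A v r us i0 Hm0 HA HD Z0 s) => /=; lia.
    have Hc' : ~~ (s <= (m-1)*(n-1))%N by rewrite -ltnNge.
    have [h1 h2] := @a1 m n s Hm Hn Hs Hc'.
    by apply: (@zero_range _ m n A v r us iN Hm0 HA HD ZN s).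
  move=> HZ. exists 1%N, (fun _ _ => 0). split => //. split => // idx.
  rewrite HZ big_ord1. symmetry. by apply: (@tpow_zero _ m n _ idx (Ordinal Hm0)).
split.
  move=> Hn3 [r [us [Hr [Hp HD]]]] [i [Hi1 [Hi2 Hvi]]].
  pose Zn j := forall o : 'I_n, nat_of_ord o = j -> forall k, us k o = 0.
  have step : forall j j', Zn j -> (j < n)%N -> (j' < n)%N -> (j <= m * j')%N ->
      (m*j' <= j + (m-1)*(n-1))%N -> Zn j'.
    move=> j j' Zj Hj Hj' h1 h2 o Ho.
    apply: (@diag_zero _ m n A v r us o Hm0 HA HD Hp).
    rewrite Ho. apply: (@zero_range _ m n A v r us (Ordinal Hj) Hm0 HA HD) => //=.
    by move=> k; apply: Zj.
  have Zi : Zn i.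
    move=> o Ho; apply: (@diag_zero _ m n A v r us o Hm0 HA HD Hp).
    by rewrite Ho mulnC.
  have Zup : forall d, (i + d <= n - 2)%N -> Zn (i + d)%N.
    elim=> [|d IH] h; first by move=> o Ho; apply: Zi; rewrite Ho addn0.
    rewrite addnS -addn1.
    apply: (step (i+d)%N).
    - apply: IH; lia.
    - lia.
    - lia.
    - apply: leq_trans (leq_addr 1 _) _; apply: leq_pmull; lia.
    - apply: a2 => //; lia.
  have Zdn : forall d, (d < i)%N -> Zn (i - d)%N.
    elim=> [|d IH] h; first by move=> o Ho; apply: Zi; rewrite Ho subn0.
    have -> : (i - d.+1 = (i - d) - 1)%N by lia.
    apply: (step (i-d)%N).
    - apply: IH; lia.
    - lia.
    - lia.
    - apply: a3; lia.
    - apply: a4; lia.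
  have Zall : forall j, (1 <= j)%N -> (j <= n-2)%N -> Zn j.
    move=> j h1 h2. case: (leqP i j) => h.
      have -> : j = (i + (j - i))%N by lia. apply: Zup; lia.
    have -> : j = (i - (i - j))%N by lia. apply: Zdn; lia.
  have g0 := @diag_ge0 _ m n A v r us i0 HA HD Hp. rewrite /= muln0 in g0.
  have gN := @diag_ge0 _ m n A v r us iN HA HD Hp. rewrite /= mulnC in gN.
  split => //; split => // idx.
  have E0 : forall k : 'I_m, nat_of_ord (idx k) != 0%N -> tpow m (@ebasis R n 0) idx = 0.
    move=> k hk; apply: (@tpow_zero _ m n _ idx k). by rewrite /ebasis (negbTE hk).
  have EN : forall k : 'I_m, nat_of_ord (idx k) != (n-1)%N -> tpow m (@ebasis R n (n-1)) idx = 0.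
    move=> k hk; apply: (@tpow_zero _ m n _ idx k). by rewrite /ebasis (negbTE hk).
  case: (boolP [exists k, (0 < idx k)%N && (idx k < n-1)%N]).
    move=> /existsP [k /andP [h1 h2]].
    have t0 := E0 k ltac:(lia). have tN := EN k ltac:(lia).
    rewrite t0 tN !mulr0 addr0 HD big1 // => k' _.
    apply: (@tpow_zero _ m n _ idx k). apply: (Zall (idx k)) => //; lia.
  rewrite negb_exists => /forallP Hall.
  have Hk : forall k, nat_of_ord (idx k) = 0%N \/ nat_of_ord (idx k) = (n-1)%N.
    move=> k; have := Hall k; have := ltn_ord (idx k); lia.
  case: (boolP [forall k, nat_of_ord (idx k) == 0%N]).
    move=> /forallP H0.
    have s0 : (\sum_(k<m) nat_of_ord (idx k) = 0)%N.
      by rewrite big1 // => k _; apply/eqP.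
    rewrite HA s0 (EN (Ordinal Hm0)); last by rewrite (eqP (H0 _)); lia.
    rewrite /tpow big1 ?mulr1 ?mulr0 ?addr0 // => k _. by rewrite /ebasis H0.
  rewrite negb_forall => /existsP [k1 hk1].
  case: (boolP [forall k, nat_of_ord (idx k) == (n-1)%N]).
    move=> /forallP HN'.
    have sN : (\sum_(k<m) nat_of_ord (idx k) = (n-1) * m)%N.
      rewrite (eq_bigr (fun _ => (n-1)%N)); last by move=> k _; apply/eqP.
      by rewrite sum_nat_const card_ord mulnC.
    rewrite HA sN (E0 k1) // mulr0 add0r /tpow big1 ?mulr1 // => k _.
    by rewrite /ebasis HN'.
  rewrite negb_forall => /existsP [k2 hk2].
  have e1 : nat_of_ord (idx k1) = (n-1)%N by have := Hk k1; lia.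
  have e2 : nat_of_ord (idx k2) = 0%N by have := Hk k2; lia.
  have t0 := E0 k1 ltac:(lia). have tN := EN k2 ltac:(lia).
  rewrite t0 tN !mulr0 addr0 HA.
  set s := (\sum_(k<m) _)%N.
  have hs1 : (n - 1 <= s)%N by rewrite -e1 /s (bigD1 k1) //=; apply: leq_addr.
  have hs2 : (s <= (m-1)*(n-1))%N.
    rewrite /s (bigD1 k2) //= e2 add0n.
    apply: (@leq_trans (\sum_(k < m | k != k2) (n-1))%N).
      apply: leq_sum => k _; have := ltn_ord (idx k); lia.
    rewrite sum_nat_const; apply: leq_mul => //. have := cardC1 k2. rewrite card_ord subn1 => <-. by apply: subset_leq_card; apply/subsetP => x; rewrite !inE.
  have h1n : (1 < n)%N by lia.
  apply: (@zero_range _ m n A v r us (Ordinal h1n) Hm0 HA HD) => /=; [|lia|lia].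
  by move=> k; apply: (Zall 1%N) => //; lia.
move=> H0 [j [h1 [h2 hv]]] [r [us [Hr [Hp HD]]]].
have Z0 := @diag_zero _ m n A v r us i0 Hm0 HA HD Hp.
rewrite /= muln0 in Z0. have {}Z0 := Z0 H0.
move: hv; rewrite (@zero_range _ m n A v r us i0 Hm0 HA HD Z0 j) ?eqxx //= add0n; exact: a5.
Qed.
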